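(* Fix integers $s \geq 2$ and $q \ge 1$, and let $\mathcal{F} \subseteq Z_s^q$ be a $\{0,1\}$-covering family of vectors. Then $|\mathcal{F}| \leq 2^{q-1}$. For $s=2$ equality can be attained, i.e. there is a $\{0,1\}$-covering family in $Z_2^q$ of size $2^{q-1}$.
   Context: Let $Z_s$ be the ring of integers modulo $s$. For $A \subseteq Z_s$, a vector $v=(v_1,\dots,v_q)\in Z_s^q$ is $A$-covering if for every $a \in A$ there is $1 \le i \le q$ with $v_i = a$. A family $\mathcal{F} \subseteq Z_s^q$ is $A$-covering if for every ordered pair of distinct vectors $u,v \in \mathcal{F}$ the difference $u-v$ is $A$-covering. *)

(* Defs.v *)
From mathcomp Require Import all_boot all_algebra.
Set Implicit Arguments. Unset Strict Implicit. Unset Printing Implicit Defensive.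
Import GRing.Theory.
Local Open Scope ring_scope.

(* Z_s is 'Z_s (ring of integers modulo s, meaningful for 1 < s);
   vectors of Z_s^q are finite functions 'I_q -> 'Z_s. *)
Definition vec (s q : nat) := {ffun 'I_q -> 'Z_s}.

Definition covering_vec (s q : nat) (A : {set 'Z_s}) (v : vec s q) : bool :=
  [forall a in A, [exists i : 'I_q, v i == a]].

Definition covering_family (s q : nat) (A : {set 'Z_s}) (F : {set vec s q}) : bool :=
  [forall u in F, forall v in F, (u != v) ==> covering_vec A (u - v)].

Definition A01 (s : nat) : {set 'Z_s} := [set 0; 1].

(* Main.v *)
Require Import Defs.
From mathcomp Require Import all_boot all_algebra.
Set Implicit Arguments. Unset Strict Implicit. Unset Printing Implicit Defensive.
Import GRing.Theory Num.Theory.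
Local Open Scope ring_scope.

Lemma card_bound (T : finType) (q : nat) (H : {set T}) (h g : T -> 'I_q -> rat) :
  (forall x y, x \in H -> y \in H -> x != y -> exists i, g y i = h x i) ->
  (forall x, x \in H -> forall i, g x i != h x i) ->
  (#|H| <= 2 ^ q)%N.
Proof.
move=> Hoff Hdiag.
pose N := #|H|.
pose hv (k : 'I_N) : T := enum_val k.
pose C := #|{set 'I_q}|.
pose A := \matrix_(k < N, j < C) \prod_(i < q) (if i \in (enum_val j : {set 'I_q}) then 1 else - h (hv k) i).
pose B := \matrix_(j < C, l < N) \prod_(i < q) (if i \in (enum_val j : {set 'I_q}) then g (hv l) i else 1).
pose d := \row_(l < N) \prod_(i < q) (g (hv l) i - h (hv l) i).
have EM : A *m B = diag_mx d.
  apply/matrixP => k l; rewrite !mxE.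
  transitivity (\prod_(i < q) (g (hv l) i - h (hv k) i)).
    rewrite bigA_distr.
    rewrite (big_enum_val (fun J : {set 'I_q} => \prod_i (if i \in J then g (hv l) i else - h (hv k) i))) /=.
    apply: eq_bigr => j _; rewrite !mxE -big_split /=.
    by apply: eq_bigr => i _; case: ifP => _; rewrite ?mul1r ?mulr1.
  have [->|nkl] := eqVneq k l; first by rewrite mulr1n.
  rewrite mulr0n.
  have hk : hv k \in H by apply: enum_valP.
  have hl : hv l \in H by apply: enum_valP.
  have nh : hv k != hv l by apply: contra nkl => /eqP /enum_val_inj ->.
  have [i Hi] := Hoff _ _ hk hl nh.
  by apply/eqP; rewrite prodf_seq_eq0; apply/hasP; exists i; rewrite ?mem_index_enum // Hi subrr.
have Mu : A *m B \in unitmx.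
  rewrite unitmxE EM det_diag unitfE; apply/prodf_neq0 => l _; rewrite mxE.
  apply/prodf_neq0 => i _; rewrite subr_eq0; apply: Hdiag; exact: enum_valP.
have := mxrankM_maxl A B; rewrite (mxrank_unit Mu) => /leq_trans; apply.
have -> : (2 ^ q = C)%N by rewrite /C -cardsT -powersetT card_powerset cardsT card_ord.
exact: rank_leq_col.
Qed.
Lemma vsubE s q (u v : vec s q) i : (u - v) i = u i - v i.
Proof. by rewrite /= !ffunE. Qed.
Lemma vaddE s q (u v : vec s q) i : (u + v) i = u i + v i.
Proof. by rewrite /= !ffunE. Qed.

Lemma cov_prop s q (F : {set vec s q}) : covering_family (A01 s) F ->
  forall u v, u \in F -> v \in F -> u != v ->
  (exists i, u i = v i) /\ (exists i, u i = v i + 1).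
Proof.
move=> HF u v uF vF uv.
have := forallP HF u; rewrite uF /= => /forallP /(_ v); rewrite vF uv /= /covering_vec => /forallP H0.
split.
- have := H0 0; rewrite /A01 !inE eqxx /= => /existsP [i /eqP Hi].
  by exists i; apply/eqP; rewrite -subr_eq0 -Hi vsubE.
- have := H0 1; rewrite /A01 !inE eqxx orbT /= => /existsP [i /eqP Hi].
  by exists i; rewrite -Hi vsubE addrC subrK.
Qed.

Definition onev s q : vec s q := [ffun=> 1].
Definition th s (a : 'Z_s) : rat := (a : nat)%:R.

Lemma thI s (a b : 'Z_s) : (th a == th b) = (a == b).
Proof. by rewrite /th eqr_nat. Qed.

Lemma part1 s q (F : {set vec s q}) : (0 < q)%N -> covering_family (A01 s) F ->
  (#|F| <= 2 ^ (q - 1))%N.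
Proof.
move=> q0 HF.
have cp := cov_prop HF.
pose one := onev s q.
have oneE i : one i = 1 by rewrite ffunE.
have neq1 (x : 'Z_s) : x + 1 != x.
  by apply/eqP => /(congr1 (fun z => z - x)); rewrite addrAC subrr add0r => /eqP; rewrite oner_eq0.
have disj v : v \in F -> v + one \notin F.
  move=> vF; apply/negP => vF'.
  have nv : v + one != v by apply/eqP => /ffunP /(_ (Ordinal q0)); rewrite vaddE oneE => /eqP; rewrite (negPf (neq1 _)).
  have [[i Hi] _] := cp _ _ vF' vF nv.
  by move: Hi; rewrite vaddE oneE => /eqP; rewrite (negPf (neq1 _)).
pose H := F :|: [set x + one | x : vec s q in F].
have cardH : #|H| = (#|F| + #|F|)%N.
  rewrite cardsU card_imset; last exact: addIr.
  suff -> : F :&: [set x + one | x : vec s q in F] = set0 by rewrite cards0 subn0.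
  apply/setP => x; rewrite !inE; apply/negP => /andP [xF /imsetP [v vF xE]].
  by move: xF; rewrite xE (negPf (disj _ vF)).
pose pi (x : vec s q) := if x \in F then x + one else x - one.
have inH x : x \in H -> x \in F \/ exists2 v, v \in F & x = v + one.
  by rewrite !inE => /orP [->|/imsetP [v vF ->]]; [left|right; exists v].
have piF x : x \in F -> pi x = x + one by rewrite /pi => ->.
have piF' v : v \in F -> pi (v + one) = v by move=> vF; rewrite /pi (negPf (disj _ vF)) addrK.
have i0 : 'I_q := Ordinal q0.
have key : forall x y, x \in H -> y \in H -> x != y -> exists i, pi y i = x i.
  move=> x y /inH [xF|[v vF ->]] /inH [yF|[w wF ->]] nxy.
  - have [_ [i Hi]] := cp _ _ xF yF nxy.
    by exists i; rewrite piF // vaddE oneE Hi.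
  - rewrite piF' //; have [->|nxw] := eqVneq x w; first by exists i0.
    by have [[i Hi] _] := cp _ _ xF wF nxw; exists i; rewrite Hi.
  - rewrite piF //; have [->|nvy] := eqVneq v y; first by exists i0.
    by have [[i Hi] _] := cp _ _ vF yF nvy; exists i; rewrite !vaddE oneE Hi.
  - rewrite piF' //; have nwv : w != v by apply: contraNneq nxy => ->.
    by have [_ [i Hi]] := cp _ _ wF vF nwv; exists i; rewrite !vaddE oneE Hi.
have diag : forall x, x \in H -> forall i, th (pi x i) != th (x i).
  move=> x /inH [xF|[v vF ->]] i; rewrite thI.
  - by rewrite piF // vaddE oneE neq1.
  - by rewrite piF' // vaddE oneE eq_sym neq1.
have := @card_bound _ q H (fun x i => th (x i)) (fun x i => th (pi x i)).
move=> /(_ _ diag) HB.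
have : (#|H| <= 2 ^ q)%N.
  apply: HB => x y xH yH nxy; have [i Hi] := key x y xH yH nxy.
  by exists i; rewrite Hi.
have Hq : (2 ^ q = 2 * 2 ^ (q - 1))%N by rewrite -expnS subn1 prednK.
by rewrite cardH Hq addnn -mul2n leq_pmul2l.
Qed.
Definition ext n (w : {ffun 'I_n -> 'Z_2}) : vec 2 n.+1 :=
  [ffun i => if unlift ord0 i is Some j then w j else 0].

Lemma part2 q : (0 < q)%N ->
  exists F : {set vec 2 q}, covering_family (A01 2) F /\ #|F| = (2 ^ (q - 1))%N.
Proof.
case: q => // n _; rewrite subn1 /=.
have extI : injective (@ext n).
  move=> w w' E; apply/ffunP => j.
  by have := congr1 (fun f : vec 2 n.+1 => f (lift ord0 j)) E; rewrite /= !ffunE liftK.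
exists [set ext w | w : {ffun 'I_n -> 'Z_2}]; split; last first.
  by rewrite card_imset // card_ffun !card_ord.
apply/forallP => u; apply/implyP => /imsetP [w _ ->].
apply/forallP => v; apply/implyP => /imsetP [w' _ ->].
apply/implyP => nuv; apply/forallP => a; apply/implyP; rewrite /A01 !inE => /orP [] /eqP ->.
  by apply/existsP; exists ord0; rewrite vsubE !ffunE unlift_none subrr.
have /existsP [i Hi] : [exists i, ext w i != ext w' i].
  apply: contraR nuv => /existsPn H; apply/eqP/ffunP => i; exact/eqP/negPn/H.
apply/existsP; exists i; rewrite vsubE.
move: Hi; rewrite -subr_eq0; case: (ext w i - ext w' i) => [[|[|k]]] //.
Qed.

Local Close Scope ring_scope.

Theorem proposition3p1 :
  (forall (s q : nat), 1 < s -> 0 < q ->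
     forall F : {set vec s q}, covering_family (A01 s) F ->
       #|F| <= 2 ^ (q - 1))
  /\
  (forall q : nat, 0 < q ->
     exists F : {set vec 2 q}, covering_family (A01 2) F /\ #|F| = 2 ^ (q - 1)).
Proof.
split.
- by move=> s q _ q0 F HF; apply: part1.
- exact: part2.
Qed.
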